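(* Let $p<1/2$, $c(p)=\big|\log\frac{1-p}{p}\big|^{-1}$, and $c>c(p)$. Then $$\mu_p^{\mathcal{U}_0}\big(x: D(x)>c\log t\big)=o(1/t)\quad\text{as }t\to\infty.$$
   Context: Configurations are subsets of $\mathbb{Z}$ (occupied sites). $O$ is the configuration with every negative site occupied and every non-negative site empty; $\mathcal{U}_0$ is the set of configurations in which the number of particles in $[0,\infty)$ is finite and equal to the number of holes in $(-\infty,0)$. For $x\in\mathcal{U}_0$, $D(x)=\sum_{k\ge1}B^{(k)}(x)$, where $B^{(k)}(x)$ is the position of the $k$-th rightmost particle of $x$ plus $k$ (equivalently, the minimal number of nearest-neighbour particle jumps to empty sites needed to go from $O$ to $x$). For $p\in(0,1/2)$, $\mu_p$ is the product measure on configurations under which site $i\in\mathbb{Z}$ is occupied independently with probability $\big(1+\big(\tfrac{1-p}{p}\big)^i\big)^{-1}$; $\mathcal{U}_0$ has positive $\mu_p$-probability and $\mu_p^{\mathcal{U}_0}=\mu_p(\cdot\mid\mathcal{U}_0)$. *)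

(* Defs.v *)
From Stdlib Require Import Reals ZArith List.
Open Scope R_scope.

(* A configuration: the set of occupied sites, as a boolean predicate on Z. *)
Definition Config := Z -> bool.

(* Occupation probability of site i under mu_p: (1 + ((1-p)/p)^i)^{-1}. *)
Definition rho (p : R) (i : Z) : R := / (1 + powerRZ ((1 - p) / p) i).

Definition site_factor (p : R) (x : Config) (i : Z) : R :=
  if x i then rho p i else 1 - rho p i.

Fixpoint fin_prod (p : R) (x : Config) (N : nat) : R :=
  match N with
  | O => site_factor p x 0%Z
  | S n => fin_prod p x n * site_factor p x (Z.of_nat (S n))
             * site_factor p x (- Z.of_nat (S n))%Z
  end.

(* mu_p({x}) = m : the infinite product over Z (limit of the symmetric
   finite products, by continuity of the measure from above). *)
Definition point_mass (p : R) (x : Config) (m : R) : Prop :=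
  Un_cv (fun N => fin_prod p x N) m.

Fixpoint list_mass (p : R) (L : list Config) (r : R) : Prop :=
  match L with
  | nil => r = 0
  | x :: L' => exists m r', point_mass p x m /\ list_mass p L' r' /\ r = m + r'
  end.

Definition distinct_configs (L : list Config) : Prop :=
  ForallOrdPairs (fun x y => exists z, x z <> y z) L.

(* s = sum_{x in A} mu_p({x})  (sum of nonnegative terms = sup of finite partial
   sums).  For a countable set A this is mu_p(A) by countable additivity. *)
Definition mass (p : R) (A : Config -> Prop) (s : R) : Prop :=
  is_lub (fun r => exists L, distinct_configs L /\ Forall A L /\ list_mass p L r) s.

Definition U0 (x : Config) : Prop :=
  exists P H : list Z, NoDup P /\ NoDup H /\ length P = length H /\
    (forall z, (0 <= z)%Z -> (x z = true <-> In z P)) /\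
    (forall z, (z < 0)%Z -> (x z = false <-> In z H)).

(* v = mu_p^{U_0}(A) = mu_p(A /\ U_0) / mu_p(U_0); U_0 is countable. *)
Definition cond_prob (p : R) (A : Config -> Prop) (v : R) : Prop :=
  exists a z, mass p (fun x => U0 x /\ A x) a /\ mass p U0 z /\ v = a / z.

Fixpoint zsum (f : nat -> Z) (K : nat) : Z :=
  match K with
  | O => 0%Z
  | S k => (zsum f k + f (S k))%Z
  end.

(* D(x) = d, where D(x) = sum_{k>=1} B^(k)(x), B^(k)(x) = pos_k + k, pos_k the
   position of the k-th rightmost particle (pos enumerates the occupied sites in
   strictly decreasing order). *)
Definition DVal (x : Config) (d : Z) : Prop :=
  exists pos : nat -> Z,
    (forall k, (1 <= k)%nat -> (pos (S k) < pos k)%Z) /\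
    (forall z, x z = true <-> exists k, (1 <= k)%nat /\ pos k = z) /\
    exists K : nat, (forall k, (K <= k)%nat -> (pos k + Z.of_nat k)%Z = 0%Z) /\
      d = zsum (fun k => (pos k + Z.of_nat k)%Z) K.

(* Main.v *)
Require Import Defs.
From Stdlib Require Import Reals ZArith List Lra Lia.
Open Scope R_scope.

Fixpoint prodS (h : Z -> bool -> R) (x : Config) (S : list Z) : R :=
  match S with nil => 1 | a :: S' => h a (x a) * prodS h x S' end.
Fixpoint totS (h : Z -> bool -> R) (S : list Z) : R :=
  match S with nil => 1 | a :: S' => (h a true + h a false) * totS h S' end.
Fixpoint sumC (f : Config -> R) (L : list Config) : R :=
  match L with nil => 0 | x :: L' => f x + sumC f L' end.
Definition dist_on (S : list Z) (L : list Config) :=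
  ForallOrdPairs (fun x y => exists z, In z S /\ x z <> y z) L.

Lemma sumC_filter f (g : Config -> bool) L :
  sumC f L = sumC f (filter g L) + sumC f (filter (fun x => negb (g x)) L).
Proof. induction L as [|x L IH]; simpl; [lra|]. destruct (g x); simpl; lra. Qed.

Lemma Forall_filter' {A} (P : A -> Prop) g L : Forall P L -> Forall P (filter g L).
Proof. induction 1; simpl; auto. destruct (g x); auto. Qed.

Lemma FOP_filter {A} (Rl : A -> A -> Prop) g L :
  ForallOrdPairs Rl L -> ForallOrdPairs Rl (filter g L).
Proof.
  induction 1; simpl; [constructor|]. destruct (g a); auto.
  constructor; auto. now apply Forall_filter'.
Qed.

Lemma FOP_weaken {A} (R1 R2 : A -> A -> Prop) L :
  (forall x y, In x L -> In y L -> R1 x y -> R2 x y) ->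
  ForallOrdPairs R1 L -> ForallOrdPairs R2 L.
Proof.
  intros H F; induction F; constructor.
  - rewrite Forall_forall in *. intros y Hy. apply H; simpl; auto.
  - apply IHF. intros; apply H; simpl; auto.
Qed.

Lemma sumC_nonneg f L : (forall x, 0 <= f x) -> 0 <= sumC f L.
Proof. intro H; induction L; simpl; [lra|]. specialize (H a); lra. Qed.

Lemma sumC_scal f k L : sumC (fun x => k * f x) L = k * sumC f L.
Proof. induction L; simpl; [ring|]. rewrite IHL; ring. Qed.

Lemma sumC_ext f g L : (forall x, In x L -> f x = g x) -> sumC f L = sumC g L.
Proof. induction L; simpl; intros; [auto|]. rewrite H by auto. rewrite IHL; auto. Qed.

Lemma sumC_le f g L : (forall x, In x L -> f x <= g x) -> sumC f L <= sumC g L.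
Proof. induction L; simpl; intros H; [lra|].
  assert (sumC f L <= sumC g L) by (apply IHL; auto).
  specialize (H a (or_introl eq_refl)). lra. Qed.

Lemma prodS_nonneg h x S : (forall i b, 0 <= h i b) -> 0 <= prodS h x S.
Proof. intro H; induction S; simpl; [lra|]. apply Rmult_le_pos; auto. Qed.

Lemma gen_bound h : (forall i b, 0 <= h i b) ->
  forall S L, dist_on S L -> sumC (fun x => prodS h x S) L <= totS h S.
Proof.
  intros Hh S. induction S as [|a S IH]; intros L HL.
  - destruct L as [|x [|y L]]; simpl; try lra.
    inversion HL; subst. inversion H1; subst. destruct H3 as [z [[] _]].
  - rewrite (sumC_filter _ (fun x => x a) L). simpl.
    assert (Ht : forall b, sumC (fun x => h a (x a) * prodS h x S)
       (filter (fun x => Bool.eqb (x a) b) L) <= h a b * totS h S).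
    { intro b. rewrite (sumC_ext _ (fun x => h a b * prodS h x S)).
      - rewrite sumC_scal. apply Rmult_le_compat_l; [apply Hh|]. apply IH.
        unfold dist_on. apply FOP_weaken with
          (R1 := fun x y => exists z, In z (a :: S) /\ x z <> y z).
        + intros x y Hx Hy [z [Hz Hne]]. apply filter_In in Hx, Hy.
          destruct Hx as [_ Hx]; destruct Hy as [_ Hy].
          apply Bool.eqb_prop in Hx, Hy.
          destruct Hz as [<-|Hz]; [congruence|eauto].
        + now apply FOP_filter.
      - intros x Hx. apply filter_In in Hx. destruct Hx as [_ Hx].
        apply Bool.eqb_prop in Hx. now rewrite Hx. }
    pose proof (Ht true) as H1. pose proof (Ht false) as H2.
    replace (filter (fun x => Bool.eqb (x a) true) L) with (filter (fun x : Config => x a) L) in H1.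
    2:{ apply filter_ext. intro x; destruct (x a); auto. }
    replace (filter (fun x => Bool.eqb (x a) false) L) with (filter (fun x : Config => negb (x a)) L) in H2.
    2:{ apply filter_ext. intro x; destruct (x a); auto. }
    lra.
Qed.
Fixpoint sites (N : nat) : list Z :=
  match N with O => 0%Z :: nil
  | S n => Z.of_nat (S n) :: (- Z.of_nat (S n))%Z :: sites n end.

Definition fac (p : R) (i : Z) (b : bool) : R := if b then rho p i else 1 - rho p i.

Lemma fin_prod_S p x N : fin_prod p x N = prodS (fac p) x (sites N).
Proof.
  assert (E : forall i, site_factor p x i = fac p i (x i)) by reflexivity.
  induction N; simpl; rewrite ?E; [ring|].
  rewrite IHN. ring.
Qed.

Definition wt (i : Z) (b : bool) : Z :=
  ((if b then i else 0) + (if Z.ltb i 0 then - i else 0))%Z.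

Fixpoint Fw (x : Config) (S : list Z) : Z :=
  match S with nil => 0%Z | a :: S' => (wt a (x a) + Fw x S')%Z end.

Definition hw (p l : R) (i : Z) (b : bool) : R := fac p i b * exp (IZR (wt i b) * l).

Lemma prodS_hw p l x S : prodS (hw p l) x S = prodS (fac p) x S * exp (IZR (Fw x S) * l).
Proof.
  induction S; simpl. { rewrite Rmult_0_l, exp_0; ring. }
  rewrite IHS. unfold hw. rewrite plus_IZR, Rmult_plus_distr_r, exp_plus. ring.
Qed.

Lemma exp_INR n l : exp (INR n * l) = exp l ^ n.
Proof.
  induction n. { simpl. rewrite Rmult_0_l, exp_0; auto. }
  rewrite S_INR, Rmult_plus_distr_r, exp_plus, IHn, Rmult_1_l. simpl. ring.
Qed.

Section Q.
Variable p : R.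
Hypothesis hp0 : 0 < p.
Hypothesis hp : p < 1/2.
Let q := (1 - p) / p.

Lemma q_gt1 : 1 < q.
Proof. unfold q. apply Rmult_lt_reg_r with p; auto. unfold Rdiv.
  rewrite Rmult_assoc, Rinv_l by lra. lra. Qed.

Lemma rho_pos n : rho p (Z.of_nat n) = / (1 + q ^ n).
Proof. unfold rho. rewrite <- pow_powerRZ. reflexivity. Qed.

Lemma rho_neg n : rho p (- Z.of_nat n) = / (1 + / q ^ n).
Proof. unfold rho. rewrite powerRZ_neg', <- pow_powerRZ. reflexivity. Qed.

Lemma qn_pos n : 0 < q ^ n.
Proof. apply pow_lt. pose proof q_gt1. lra. Qed.

Lemma rho_range i : 0 < rho p i < 1.
Proof.
  assert (0 < powerRZ q i).
  { apply powerRZ_lt. pose proof q_gt1; lra. }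
  unfold rho. fold q. split. apply Rinv_0_lt_compat; lra.
  rewrite <- Rinv_1. apply Rinv_lt_contravar; lra.
Qed.

Lemma fac_nonneg i b : 0 <= fac p i b.
Proof. pose proof (rho_range i). destruct b; simpl; lra. Qed.

Lemma hw_nonneg l i b : 0 <= hw p l i b.
Proof. unfold hw. apply Rmult_le_pos. apply fac_nonneg. left; apply exp_pos. Qed.

Lemma rho_pos_le n : rho p (Z.of_nat n) <= / q ^ n.
Proof. rewrite rho_pos. pose proof (qn_pos n). apply Rinv_le_contravar; lra. Qed.

Lemma rho_neg_le n : 1 - rho p (- Z.of_nat n) <= / q ^ n.
Proof. rewrite rho_neg. pose proof (qn_pos n).
  assert (0 < / q ^ n) by (apply Rinv_0_lt_compat; lra).
  set (y := / q ^ n) in *.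
  replace (1 - / (1 + y)) with (y / (1 + y)) by (field; lra).
  assert (/ (1 + y) <= 1) by (rewrite <- Rinv_1; apply Rinv_le_contravar; lra).
  unfold Rdiv. apply Rle_trans with (y * 1); [|lra]. apply Rmult_le_compat_l; lra.
Qed.

Fixpoint geo (r : R) (N : nat) : R :=
  match N with O => 0 | S n => geo r n + r ^ (S n) end.

Lemma geo_bound r N : 0 <= r < 1 -> 0 <= geo r N <= r / (1 - r).
Proof.
  intros Hr.
  assert (E : geo r N * (1 - r) = r - r ^ (S N)).
  { induction N; simpl. ring. simpl in IHN. rewrite Rmult_plus_distr_r, IHN. ring. }
  assert (0 <= r ^ S N) by (apply pow_le; lra).
  assert (G : 0 <= geo r N).
  { clear E H. induction N; simpl; [lra|]. assert (0 <= r * r ^ N) by (apply pow_le with (n := S N); lra). simpl in *; lra. }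
  split; auto. apply Rmult_le_reg_r with (1 - r); [lra|].
  unfold Rdiv. rewrite Rmult_assoc, Rinv_l by lra. lra.
Qed.
End Q.

Section Q2.
Variable p : R.
Hypothesis hp0 : 0 < p.
Hypothesis hp : p < 1/2.
Let q := (1 - p) / p.

Lemma inv1p_ge y : 0 <= y -> exp (- y) <= / (1 + y).
Proof.
  intro Hy. pose proof (exp_ineq1_le y). pose proof (exp_pos (-y)).
  assert (exp (-y) * exp y = 1) by (rewrite <- exp_plus; replace (-y+y) with 0 by ring; apply exp_0).
  apply Rmult_le_reg_r with (1 + y); [lra|]. rewrite Rinv_l by lra.
  apply Rle_trans with (exp (-y) * exp y); [|lra]. apply Rmult_le_compat_l; lra.
Qed.

Lemma tot_bound l N :
  totS (hw p l) (sites N) <= exp (2 * geo (exp l / q) N).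
Proof.
  pose proof (q_gt1 p hp0 hp) as Hq. fold q in Hq.
  induction N.
  - simpl. unfold hw, fac, wt. simpl. rewrite Rmult_0_l, exp_0. simpl.
    rewrite Rmult_0_r, exp_0. lra.
  - cbn [sites totS geo].
    set (m := S N).
    assert (Hr : 0 <= (exp l / q) ^ m).
    { apply pow_le. unfold Rdiv. apply Rmult_le_pos. left; apply exp_pos.
      left; apply Rinv_0_lt_compat; lra. }
    assert (Er : (exp l / q) ^ m = exp l ^ m * / q ^ m).
    { unfold Rdiv. rewrite Rpow_mult_distr, pow_inv. auto. }
    assert (A1 : hw p l (Z.of_nat m) true + hw p l (Z.of_nat m) false <= 1 + (exp l / q) ^ m).
    { unfold hw, fac, wt.
      replace (Z.of_nat m <? 0)%Z with false by (symmetry; apply Z.ltb_ge; lia).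
      rewrite Z.add_0_r, Z.add_0_r, <- INR_IZR_INZ, exp_INR. simpl (IZR 0). rewrite Rmult_0_l, exp_0.
      pose proof (rho_pos_le p hp0 hp m). pose proof (rho_range p hp0 hp (Z.of_nat m)).
      fold q in H. rewrite Er.
      assert (0 < exp l ^ m) by (apply pow_lt, exp_pos).
      assert (rho p (Z.of_nat m) * exp l ^ m <= / q ^ m * exp l ^ m) by (apply Rmult_le_compat_r; lra).
      lra. }
    assert (A2 : hw p l (- Z.of_nat m) true + hw p l (- Z.of_nat m) false <= 1 + (exp l / q) ^ m).
    { unfold hw, fac, wt.
      replace (- Z.of_nat m <? 0)%Z with true by (symmetry; apply Z.ltb_lt; lia).
      replace (- Z.of_nat m + - - Z.of_nat m)%Z with 0%Z by lia.
      replace (0 + - - Z.of_nat m)%Z with (Z.of_nat m) by lia.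
      rewrite <- INR_IZR_INZ, exp_INR. simpl (IZR 0). rewrite Rmult_0_l, exp_0.
      pose proof (rho_neg_le p hp0 hp m). pose proof (rho_range p hp0 hp (- Z.of_nat m)).
      fold q in H. rewrite Er.
      assert (0 < exp l ^ m) by (apply pow_lt, exp_pos).
      assert ((1 - rho p (- Z.of_nat m)) * exp l ^ m <= / q ^ m * exp l ^ m) by (apply Rmult_le_compat_r; lra).
      lra. }
    pose proof (exp_ineq1_le ((exp l / q) ^ m)).
    assert (0 <= totS (hw p l) (sites N)).
    { clear IHN A1 A2. induction (sites N); simpl; [lra|]. apply Rmult_le_pos; auto.
      pose proof (hw_nonneg p hp0 hp l a true). pose proof (hw_nonneg p hp0 hp l a false). lra. }
    assert (0 <= hw p l (Z.of_nat m) true + hw p l (Z.of_nat m) false).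
    { pose proof (hw_nonneg p hp0 hp l (Z.of_nat m) true). pose proof (hw_nonneg p hp0 hp l (Z.of_nat m) false). lra. }
    assert (0 <= hw p l (- Z.of_nat m) true + hw p l (- Z.of_nat m) false).
    { pose proof (hw_nonneg p hp0 hp l (- Z.of_nat m) true). pose proof (hw_nonneg p hp0 hp l (- Z.of_nat m) false). lra. }
    replace (2 * (geo (exp l / q) N + (exp l / q) ^ m)) with
      ((exp l / q) ^ m + ((exp l / q) ^ m + 2 * geo (exp l / q) N)) by ring.
    rewrite !exp_plus.
    apply Rmult_le_compat; try lra.
    apply Rmult_le_pos; lra.
    apply Rmult_le_compat; try lra.
Qed.

Definition OC : Config := fun z => Z.ltb z 0.

Lemma OC_lower N : / 2 * exp (- (2 * geo (/ q) N)) <= fin_prod p OC N.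
Proof.
  pose proof (q_gt1 p hp0 hp) as Hq. fold q in Hq.
  induction N.
  - simpl. unfold site_factor, OC. simpl. unfold rho. simpl. rewrite Rmult_0_r, Ropp_0, exp_0. lra.
  - change (fin_prod p OC (S N)) with (fin_prod p OC N * site_factor p OC (Z.of_nat (S N)) * site_factor p OC (- Z.of_nat (S N))).
    change (geo (/q) (S N)) with (geo (/q) N + (/q)^(S N)).
    set (m := S N).
    assert (E1 : site_factor p OC (Z.of_nat m) = / (1 + (/ q) ^ m)).
    { unfold site_factor, OC. replace (Z.of_nat m <? 0)%Z with false by (symmetry; apply Z.ltb_ge; lia).
      rewrite rho_pos by auto. fold q. rewrite pow_inv. pose proof (qn_pos p hp0 hp m). fold q in H.
      field. split; lra. }
    assert (E2 : site_factor p OC (- Z.of_nat m) = / (1 + (/ q) ^ m)).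
    { unfold site_factor, OC. replace (- Z.of_nat m <? 0)%Z with true by (symmetry; apply Z.ltb_lt; lia).
      rewrite rho_neg by auto. fold q. rewrite pow_inv. auto. }
    rewrite E1, E2.
    assert (0 <= (/ q) ^ m) by (apply pow_le; left; apply Rinv_0_lt_compat; lra).
    pose proof (inv1p_ge _ H).
    replace (- (2 * (geo (/ q) N + (/ q) ^ m))) with (- (2 * geo (/ q) N) + - (/ q) ^ m + - (/ q) ^ m) by ring.
    rewrite !exp_plus. pose proof (exp_pos (- (/ q) ^ m)). pose proof (exp_pos (- (2 * geo (/ q) N))).
    rewrite <- !Rmult_assoc.
    apply Rmult_le_compat; try lra.
    all: try (apply Rmult_le_pos; lra).
    all: try (apply Rmult_le_compat; try lra; apply Rmult_le_pos; lra).
Qed.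
End Q2.

Definition gz (x : Config) (i : Z) : Z := if x i then i else 0%Z.

Fixpoint isum (x : Config) (a : Z) (n : nat) : Z :=
  match n with O => 0%Z | S n => (gz x a + isum x (a + 1) n)%Z end.

Lemma isum_split x m : forall a n, isum x a (m + n) = (isum x a m + isum x (a + Z.of_nat m) n)%Z.
Proof.
  induction m; intros a n; simpl. { rewrite Z.add_0_r. lia. }
  rewrite IHm. replace (a + 1 + Z.of_nat m)%Z with (a + Z.pos (Pos.of_succ_nat m))%Z by lia. lia.
Qed.

Lemma isum_zero x n : forall a, (forall z, (a <= z < a + Z.of_nat n)%Z -> x z = false) -> isum x a n = 0%Z.
Proof.
  induction n; intros a H; simpl; auto.
  unfold gz. rewrite H by lia. rewrite IHn; auto. intros z Hz; apply H; lia.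
Qed.

Fixpoint gs (x : Config) (S : list Z) : Z :=
  match S with nil => 0%Z | a :: S' => (gz x a + gs x S')%Z end.

Fixpoint tri (N : nat) : Z := match N with O => 0%Z | S n => (tri n + Z.of_nat (S n))%Z end.

Lemma Fw_gs x N : Fw x (sites N) = (gs x (sites N) + tri N)%Z.
Proof.
  induction N; simpl. { unfold wt, gz. destruct (x 0%Z); simpl; lia. }
  rewrite IHN. unfold wt, gz.
  replace (Z.pos (Pos.of_succ_nat N) <? 0)%Z with false by (symmetry; apply Z.ltb_ge; lia).
  replace (Z.neg (Pos.of_succ_nat N) <? 0)%Z with true by (symmetry; apply Z.ltb_lt; lia).
  destruct (x (Z.pos (Pos.of_succ_nat N))), (x (Z.neg (Pos.of_succ_nat N))); lia.
Qed.

Lemma isum1 x a : isum x a 1 = gz x a.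
Proof. simpl. lia. Qed.

Lemma gs_isum x N : gs x (sites N) = isum x (- Z.of_nat N) (2 * N + 1).
Proof.
  induction N. { simpl. lia. }
  change (gs x (sites (S N))) with (gz x (Z.of_nat (S N)) + (gz x (- Z.of_nat (S N)) + gs x (sites N)))%Z.
  replace (2 * S N + 1)%nat with (1 + ((2 * N + 1) + 1))%nat by lia.
  rewrite (isum_split x 1), (isum_split x (2 * N + 1)), !isum1, IHN.
  replace (- Z.of_nat (S N) + Z.of_nat 1)%Z with (- Z.of_nat N)%Z by lia.
  replace (- Z.of_nat N + Z.of_nat (2 * N + 1))%Z with (Z.of_nat (S N)) by lia. lia.
Qed.

Lemma zsum_ext f g K : (forall k, (1 <= k <= K)%nat -> f k = g k) -> zsum f K = zsum g K.
Proof. induction K; simpl; intros; auto. rewrite IHK, H; auto. lia. intros; apply H; lia. Qed.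

Lemma zsum_add f g K : zsum (fun k => (f k + g k)%Z) K = (zsum f K + zsum g K)%Z.
Proof. induction K; simpl; auto. rewrite IHK; lia. Qed.

Lemma zsum_tri K : zsum (fun k => Z.of_nat k) K = tri K.
Proof. induction K; simpl; auto. rewrite IHK; lia. Qed.

Lemma zsum_stable f K N : (K <= N)%nat -> (forall k, (K <= k)%nat -> f k = 0%Z) -> zsum f N = zsum f K.
Proof.
  intros HKN H. induction N. { replace K with 0%nat by lia; auto. }
  destruct (Nat.eq_dec K (S N)). { subst; auto. }
  simpl. rewrite IHN by lia. rewrite H by lia. lia.
Qed.

Section Pos.
Variable x : Config.
Variable pos : nat -> Z.
Hypothesis Hdec : forall k, (1 <= k)%nat -> (pos (S k) < pos k)%Z.
Hypothesis Hocc : forall z, x z = true <-> exists k, (1 <= k)%nat /\ pos k = z.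

Lemma pos_mono j k : (1 <= j)%nat -> (j < k)%nat -> (pos k < pos j)%Z.
Proof.
  intros Hj Hjk. induction k. lia.
  destruct (Nat.eq_dec j k). { subst. apply Hdec; auto. }
  pose proof (Hdec k ltac:(lia)). assert (pos k < pos j)%Z by (apply IHk; lia). lia.
Qed.

Lemma pos_le j k : (1 <= j)%nat -> (j <= k)%nat -> (pos k <= pos j)%Z.
Proof. intros. destruct (Nat.eq_dec j k). subst; lia. pose proof (pos_mono j k); lia. Qed.

Lemma above_empty z : (pos 1 < z)%Z -> x z = false.
Proof.
  intros H. destruct (x z) eqn:E; auto. apply Hocc in E. destruct E as [k [Hk E]].
  pose proof (pos_le 1 k ltac:(lia) Hk). lia.
Qed.

Lemma claimC n : (1 <= n)%nat -> isum x (pos n) (Z.to_nat (pos 1 - pos n) + 1) = zsum pos n.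
Proof.
  induction n; intros Hn. lia.
  destruct (Nat.eq_dec n 0). { subst. simpl. replace (pos 1%nat - pos 1%nat)%Z with 0%Z by lia. simpl.
    unfold gz. replace (x (pos 1%nat)) with true. lia. symmetry; apply Hocc. exists 1%nat; auto. }
  pose proof (Hdec n ltac:(lia)). pose proof (pos_le 1 n ltac:(lia) ltac:(lia)).
  replace (Z.to_nat (pos 1%nat - pos (S n)) + 1)%nat with
     (1 + (Z.to_nat (pos n - pos (S n)) - 1) + (Z.to_nat (pos 1%nat - pos n) + 1))%nat by lia.
  rewrite (isum_split x (1 + (Z.to_nat (pos n - pos (S n)) - 1))), (isum_split x 1).
  replace (pos (S n) + Z.of_nat (1 + (Z.to_nat (pos n - pos (S n)) - 1)))%Z with (pos n) by lia.
  rewrite IHn by lia. rewrite (isum_zero x (Z.to_nat (pos n - pos (S n)) - 1)).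
  - rewrite isum1. unfold gz. simpl zsum. replace (x (pos (S n))) with true. lia. symmetry; apply Hocc. exists (S n); split; auto; lia.
  - intros z Hz. destruct (x z) eqn:E; auto. apply Hocc in E. destruct E as [k [Hk E]].
    subst z. destruct (le_lt_dec k n).
    + pose proof (pos_le k n Hk l). lia.
    + pose proof (pos_le (S n) k ltac:(lia) ltac:(lia)). lia.
Qed.

Lemma key N : (1 <= N)%nat -> pos N = (- Z.of_nat N)%Z -> (pos 1 <= Z.of_nat N)%Z ->
  isum x (- Z.of_nat N) (2 * N + 1) = zsum pos N.
Proof.
  intros HN HpN Hp1. pose proof (pos_le 1 N ltac:(lia) ltac:(lia)).
  replace (2 * N + 1)%nat with ((Z.to_nat (pos 1%nat - pos N) + 1) + Z.to_nat (Z.of_nat N - pos 1%nat))%nat by lia.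
  rewrite isum_split. rewrite <- HpN. rewrite claimC by auto.
  rewrite isum_zero. lia. intros z Hz. apply above_empty. lia.
Qed.
End Pos.

Lemma DVal_props x d : DVal x d -> exists N0, forall N, (N0 <= N)%nat ->
  (forall z, (Z.of_nat N < Z.abs z)%Z -> x z = OC z) /\ Fw x (sites N) = d.
Proof.
  intros [pos [Hdec [Hocc [K [HK Hd]]]]].
  exists (Nat.max 1 (Nat.max K (Z.to_nat (pos 1%nat)))). intros N HN.
  assert (HpN : pos N = (- Z.of_nat N)%Z) by (pose proof (HK N ltac:(lia)); lia).
  assert (Hp1 : (pos 1%nat <= Z.of_nat N)%Z) by lia.
  split.
  - intros z Hz. unfold OC. destruct (Z.ltb_spec z 0).
    + apply Hocc. exists (Z.to_nat (- z)). split. lia.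
      pose proof (HK (Z.to_nat (-z)) ltac:(lia)). lia.
    + apply (above_empty x pos Hdec Hocc). lia.
  - rewrite Fw_gs, gs_isum, (key x pos Hdec Hocc N) by lia.
    subst d. rewrite <- zsum_tri.
    rewrite <- zsum_add.
    apply zsum_stable. lia. intros k Hk. apply HK. auto.
Qed.

Section Main.
Variable p : R.
Hypothesis hp0 : 0 < p.
Hypothesis hp : p < 1/2.
Let q := (1 - p) / p.

Lemma fin_prod_nonneg x N : 0 <= fin_prod p x N.
Proof. rewrite fin_prod_S. apply prodS_nonneg. apply fac_nonneg; auto. Qed.

Lemma fin_prod_dec x : Un_decreasing (fun N => fin_prod p x N).
Proof.
  intro N. simpl. pose proof (fin_prod_nonneg x N).
  assert (F : forall i, 0 <= site_factor p x i <= 1).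
  { intro i. pose proof (rho_range p hp0 hp i). unfold site_factor. destruct (x i); lra. }
  pose proof (F (Z.pos (Pos.of_succ_nat N))). pose proof (F (Z.neg (Pos.of_succ_nat N))).
  set (a := site_factor p x (Z.pos (Pos.of_succ_nat N))) in *.
  set (b := site_factor p x (Z.neg (Pos.of_succ_nat N))) in *.
  set (u := fin_prod p x N) in *.
  assert (u * a <= u * 1) by (apply Rmult_le_compat_l; lra).
  assert (u * a * b <= u * a * 1) by (apply Rmult_le_compat_l; [apply Rmult_le_pos|]; lra).
  lra.
Qed.

Lemma list_mass_le L r : list_mass p L r -> forall N, r <= sumC (fun x => fin_prod p x N) L.
Proof.
  revert r; induction L as [|x L IH]; simpl; intros r H N. { lra. }
  destruct H as [m [r' [Hm [HL ->]]]].
  pose proof (decreasing_ineq _ _ (fin_prod_dec x) Hm N). pose proof (IH r' HL N). lra.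
Qed.

Lemma common_N (Q : Config -> nat -> Prop) L :
  Forall (fun x => exists N0, forall N, (N0 <= N)%nat -> Q x N) L ->
  exists N0, forall N, (N0 <= N)%nat -> Forall (fun x => Q x N) L.
Proof.
  induction 1. { exists 0%nat. constructor. }
  destruct H as [N1 H1]. destruct IHForall as [N2 H2].
  exists (Nat.max N1 N2). intros N HN. constructor. apply H1; lia. apply H2; lia.
Qed.

Lemma In_sites z N : (Z.abs z <= Z.of_nat N)%Z -> In z (sites N).
Proof.
  induction N; intros H. { simpl. left; lia. }
  destruct (Z.eq_dec z (Z.of_nat (S N))). { left; auto. }
  destruct (Z.eq_dec z (- Z.of_nat (S N))). { right; left; auto. }
  right; right. apply IHN. lia.
Qed.

Lemma dist_window L N : distinct_configs L ->
  Forall (fun x => forall z, (Z.of_nat N < Z.abs z)%Z -> x z = OC z) L ->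
  dist_on (sites N) L.
Proof.
  intros HD HF. unfold dist_on. rewrite Forall_forall in HF.
  apply FOP_weaken with (R1 := fun x y => exists z, x z <> y z); auto.
  intros x y Hx Hy [z Hz]. exists z. split; auto. apply In_sites.
  destruct (Z_le_gt_dec (Z.abs z) (Z.of_nat N)); auto.
  exfalso. apply Hz. rewrite (HF x Hx), (HF y Hy); auto; lia.
Qed.

Lemma totS_fac S : totS (fac p) S = 1.
Proof. induction S; simpl; auto. rewrite IHS. unfold fac. ring. Qed.

Lemma U0_window x : U0 x -> exists N0, forall N, (N0 <= N)%nat ->
  forall z, (Z.of_nat N < Z.abs z)%Z -> x z = OC z.
Proof.
  intros [P [H [_ [_ [_ [HP HH]]]]]].
  assert (B : forall l : list Z, exists M, forall z, In z l -> (Z.abs z <= Z.of_nat M)%Z).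
  { induction l. exists 0%nat; intros z []. destruct IHl as [M HM].
    exists (Nat.max M (Z.to_nat (Z.abs a))). intros z [<-|Hz]. lia. specialize (HM z Hz); lia. }
  destruct (B (P ++ H)) as [M HM]. exists M. intros N HN z Hz. unfold OC.
  destruct (Z.ltb_spec z 0).
  - destruct (x z) eqn:E; auto. apply HH in E; [|lia].
    assert (In z (P ++ H)) by (apply in_or_app; auto). specialize (HM z H1). lia.
  - destruct (x z) eqn:E; auto. apply HP in E; [|lia].
    assert (In z (P ++ H)) by (apply in_or_app; auto). specialize (HM z H1). lia.
Qed.

Lemma U0_bound L r : distinct_configs L -> Forall U0 L -> list_mass p L r -> r <= 1.
Proof.
  intros HD HF HM.
  assert (Forall (fun x => exists N0, forall N, (N0 <= N)%nat ->
     forall z, (Z.of_nat N < Z.abs z)%Z -> x z = OC z) L).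
  { rewrite Forall_forall in *. intros x Hx. apply U0_window; auto. }
  apply common_N in H. destruct H as [N0 H]. specialize (H N0 (le_n _)).
  pose proof (list_mass_le L r HM N0).
  pose proof (gen_bound (fac p) (fac_nonneg p hp0 hp) (sites N0) L (dist_window L N0 HD H)).
  rewrite totS_fac in H1.
  rewrite (sumC_ext _ (fun x => prodS (fac p) x (sites N0))) in H0.
  lra. intros; apply fin_prod_S.
Qed.

Lemma event_bound (th l : R) L r : 0 < l -> distinct_configs L ->
  Forall (fun x => exists d : Z, DVal x d /\ th < IZR d) L -> list_mass p L r ->
  r <= exp (- (th * l)) * exp (2 * (exp l / q / (1 - exp l / q))) \/ ~ (exp l / q < 1).
Proof.
  intros Hl HD HF HM.
  destruct (Rlt_dec (exp l / q) 1) as [Hr|Hr]; [left|right; auto].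
  assert (Forall (fun x => exists N0, forall N, (N0 <= N)%nat ->
     (forall z, (Z.of_nat N < Z.abs z)%Z -> x z = OC z) /\ th < IZR (Fw x (sites N))) L).
  { rewrite Forall_forall in *. intros x Hx. destruct (HF x Hx) as [d [Hd Ht]].
    destruct (DVal_props x d Hd) as [N0 HN0]. exists N0. intros N HN.
    destruct (HN0 N HN) as [A B]. split; auto. rewrite B; auto. }
  apply common_N in H. destruct H as [N0 H]. specialize (H N0 (le_n _)).
  pose proof (list_mass_le L r HM N0).
  assert (HW : Forall (fun x => forall z, (Z.of_nat N0 < Z.abs z)%Z -> x z = OC z) L).
  { rewrite Forall_forall in *. intros x Hx. apply H; auto. }
  pose proof (gen_bound (hw p l) (hw_nonneg p hp0 hp l) (sites N0) L (dist_window L N0 HD HW)).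
  assert (S1 : sumC (fun x => fin_prod p x N0) L <=
     sumC (fun x => exp (- (th * l)) * prodS (hw p l) x (sites N0)) L).
  { apply sumC_le. intros x Hx. rewrite Forall_forall in H. destruct (H x Hx) as [_ Hth].
    rewrite prodS_hw, <- fin_prod_S.
    pose proof (fin_prod_nonneg x N0).
    assert (1 <= exp (- (th * l)) * exp (IZR (Fw x (sites N0)) * l)).
    { rewrite <- exp_plus. rewrite <- exp_0 at 1.
      destruct (Req_dec (- (th * l) + IZR (Fw x (sites N0)) * l) 0) as [E|E]. rewrite E; lra.
      left. apply exp_increasing. 
      assert (th * l < IZR (Fw x (sites N0)) * l) by (apply Rmult_lt_compat_r; auto). lra. }
    assert (fin_prod p x N0 * 1 <= fin_prod p x N0 * (exp (- (th * l)) * exp (IZR (Fw x (sites N0)) * l)))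
      by (apply Rmult_le_compat_l; auto). lra. }
  rewrite sumC_scal in S1.
  pose proof (tot_bound p hp0 hp l N0). fold q in H2.
  assert (0 <= exp l / q) by (unfold Rdiv; apply Rmult_le_pos; [left; apply exp_pos|left; apply Rinv_0_lt_compat; pose proof (q_gt1 p hp0 hp); fold q in H3; lra]).
  pose proof (geo_bound (exp l / q) N0 ltac:(lra)).
  assert (exp (2 * geo (exp l / q) N0) <= exp (2 * (exp l / q / (1 - exp l / q)))).
  { destruct (Req_dec (geo (exp l / q) N0) (exp l / q / (1 - exp l / q))) as [E|E]. rewrite E; lra.
    left; apply exp_increasing; lra. }
  pose proof (exp_pos (- (th * l))).
  assert (exp (- (th * l)) * sumC (fun x => prodS (hw p l) x (sites N0)) L <=
          exp (- (th * l)) * exp (2 * (exp l / q / (1 - exp l / q)))).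
  { apply Rmult_le_compat_l; lra. }
  lra.
Qed.

End Main.

Theorem lemma4p3 (p c : R) (hp0 : 0 < p) (hp : p < 1 / 2)
  (hc : / Rabs (ln ((1 - p) / p)) < c) :
  forall eps : R, 0 < eps ->
  exists T : R, 0 < T /\
    forall t : R, T <= t ->
      exists v : R,
        cond_prob p (fun x => exists d : Z, DVal x d /\ c * ln t < IZR d) v /\
        Rabs (t * v) < eps.
Proof.
  intros eps Heps.
  set (q := (1 - p) / p) in *.
  assert (Hq : 1 < q) by apply (q_gt1 p hp0 hp).
  assert (Hlq : 0 < ln q) by (rewrite <- ln_1; apply ln_increasing; lra).
  rewrite Rabs_right in hc by lra.
  assert (Hc0 : 0 < c) by (pose proof (Rinv_0_lt_compat _ Hlq); lra).
  assert (Hcl : 1 < c * ln q).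
  { apply Rmult_lt_compat_r with (r := ln q) in hc; auto. rewrite Rinv_l in hc by lra. lra. }
  set (l := (/ c + ln q) / 2).
  assert (Hic : / c * c = 1) by (apply Rinv_l; lra).
  assert (Hl0 : 0 < l) by (unfold l; pose proof (Rinv_0_lt_compat _ Hc0); lra).
  assert (Hllq : l < ln q).
  { unfold l. assert (/ c < ln q). { apply Rmult_lt_reg_r with c; auto. rewrite Hic. lra. } lra. }
  assert (Hcl2 : 1 < c * l).
  { assert (E : c * l = (1 + c * ln q) / 2) by (unfold l; field; lra). rewrite E. lra. }
  set (r := exp l / q).
  assert (Hr1 : r < 1).
  { unfold r. apply Rmult_lt_reg_r with q; [lra|]. unfold Rdiv. rewrite Rmult_assoc, Rinv_l by lra.
    rewrite Rmult_1_r, Rmult_1_l. rewrite <- (exp_ln q) by lra. apply exp_increasing; auto. }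
  assert (Hr0 : 0 < r) by (unfold r, Rdiv; apply Rmult_lt_0_compat; [apply exp_pos|apply Rinv_0_lt_compat; lra]).
  set (G := exp (2 * (r / (1 - r)))).
  set (iq := / q).
  assert (Hiq : 0 < iq < 1) by (unfold iq; split; [apply Rinv_0_lt_compat; lra|rewrite <- Rinv_1; apply Rinv_lt_contravar; lra]).
  set (c0 := / 2 * exp (- (2 * (iq / (1 - iq))))).
  assert (Hc00 : 0 < c0) by (unfold c0; pose proof (exp_pos (- (2 * (iq / (1 - iq))))); lra).
  assert (Hlb : has_lb (fun N => fin_prod p OC N)).
  { exists 0. intros y [i ->]. unfold opp_seq. pose proof (fin_prod_nonneg p hp0 hp OC i). lra. }
  destruct (decreasing_cv _ (fin_prod_dec p hp0 hp OC) Hlb) as [m0 Hm0].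
  assert (Hm0c : c0 <= m0).
  { apply (Rle_cv_lim (Un := fun _ => c0) (Vn := fun N => fin_prod p OC N)); auto.
    - intro N. unfold c0. pose proof (OC_lower p hp0 hp N). fold q iq in H.
      pose proof (geo_bound iq N ltac:(lra)).
      assert (exp (- (2 * (iq / (1 - iq)))) <= exp (- (2 * geo iq N))).
      { destruct (Req_dec (geo iq N) (iq / (1 - iq))) as [E|E]. rewrite E; lra.
        left; apply exp_increasing; lra. }
      lra.
    - intros e He. exists 0%nat. intros. unfold Rdist. rewrite Rminus_diag, Rabs_R0. lra. }
  set (EU := fun r0 => exists L, distinct_configs L /\ Forall U0 L /\ list_mass p L r0).
  assert (HEU0 : EU 0) by (exists nil; split; [constructor|split; [constructor|reflexivity]]).
  assert (HEUb : bound EU) by (exists 1; intros y [L [A [B C]]]; exact (U0_bound p hp0 hp L y A B C)).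
  destruct (completeness EU HEUb (ex_intro _ 0 HEU0)) as [z Hz].
  assert (Hzc : c0 <= z).
  { apply Rle_trans with m0; auto. apply (proj1 Hz). exists (OC :: nil). split; [|split].
    - constructor; constructor.
    - constructor; [|constructor]. exists nil, nil. repeat split; try constructor.
      + intros Hx. unfold OC in Hx. apply Z.ltb_lt in Hx. lia.
      + intros [].
      + intros Hx. unfold OC in Hx. apply Z.ltb_ge in Hx. lia.
      + intros [].
    - simpl. exists m0, 0. repeat split; auto. ring. }
  set (K := G / c0).
  assert (HK : 0 < K) by (unfold K, G; apply Rdiv_lt_0_compat; [apply exp_pos|auto]).
  set (beta := c * l - 1).
  assert (Hbeta : 0 < beta) by (unfold beta; lra).
  exists (exp ((Rabs (ln (K / eps)) + 1) / beta)). split; [apply exp_pos|].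
  intros t Ht.
  assert (Ht0 : 0 < t) by (pose proof (exp_pos ((Rabs (ln (K / eps)) + 1) / beta)); lra).
  assert (Hlnt : (Rabs (ln (K / eps)) + 1) / beta <= ln t).
  { rewrite <- (ln_exp ((Rabs (ln (K / eps)) + 1) / beta)).
    destruct (Req_dec (exp ((Rabs (ln (K / eps)) + 1) / beta)) t) as [E|E]. rewrite E; lra.
    left; apply ln_increasing; [apply exp_pos|lra]. }
  set (th := c * ln t).
  set (EA := fun r0 => exists L, distinct_configs L /\
     Forall (fun x => U0 x /\ exists d : Z, DVal x d /\ th < IZR d) L /\ list_mass p L r0).
  set (B := exp (- (th * l)) * G).
  assert (HEA0 : EA 0) by (exists nil; split; [constructor|split; [constructor|reflexivity]]).
  assert (HEAb : is_upper_bound EA B).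
  { intros y [L [A [F C]]].
    destruct (event_bound p hp0 hp th l L y Hl0 A (Forall_impl _ (fun x H => proj2 H) F) C) as [H|H].
    - fold q r in H. exact H.
    - fold q r in H. lra. }
  destruct (completeness EA (ex_intro _ B HEAb) (ex_intro _ 0 HEA0)) as [a Ha].
  assert (Ha0 : 0 <= a) by (apply (proj1 Ha); auto).
  assert (HaB : a <= B) by (apply (proj2 Ha); auto).
  exists (a / z). split.
  { exists a, z. split; [exact Ha|split; [exact Hz|auto]]. }
  assert (Hz0 : 0 < z) by lra.
  assert (0 <= t * (a / z)) by (apply Rmult_le_pos; [lra|unfold Rdiv; apply Rmult_le_pos; [lra|left; apply Rinv_0_lt_compat; lra]]).
  rewrite Rabs_right by lra.
  assert (S1 : t * (a / z) <= t * (B / c0)).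
  { apply Rmult_le_compat_l; [lra|]. unfold Rdiv.
    apply Rle_trans with (B * / z). apply Rmult_le_compat_r; [left; apply Rinv_0_lt_compat|]; lra.
    apply Rmult_le_compat_l. unfold B; pose proof (exp_pos (- (th * l))); pose proof (exp_pos (2 * (r / (1 - r)))); fold G in H1;
      apply Rmult_le_pos; lra.
    apply Rinv_le_contravar; lra. }
  assert (S2 : t * (B / c0) = exp (- (beta * ln t)) * K).
  { unfold B, K, th, beta. rewrite <- (exp_ln t) at 1 by lra. unfold Rdiv.
    replace (- (c * ln t * l)) with (- ((c * l - 1) * ln t) + - ln t) by ring.
    rewrite exp_plus. replace (- ln t) with (- ln t) by ring.
    assert (exp (ln t) * exp (- ln t) = 1) by (rewrite <- exp_plus, Rplus_opp_r, exp_0; auto).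
    transitivity (exp (- ((c * l - 1) * ln t)) * (exp (ln t) * exp (- ln t)) * (G * / c0)); [ring|].
    rewrite H0. ring. }
  assert (S3 : exp (- (beta * ln t)) < eps / K).
  { rewrite <- (exp_ln (eps / K)) by (apply Rdiv_lt_0_compat; auto).
    apply exp_increasing.
    assert (ln (eps / K) = - ln (K / eps)).
    { rewrite <- ln_Rinv by (apply Rdiv_lt_0_compat; auto). f_equal. field. lra. }
    rewrite H0.
    assert ((Rabs (ln (K / eps)) + 1) <= beta * ln t).
    { apply Rmult_le_compat_l with (r := beta) in Hlnt; [|lra].
      replace (beta * ((Rabs (ln (K / eps)) + 1) / beta)) with (Rabs (ln (K / eps)) + 1) in Hlnt by (field; lra). lra. }
    pose proof (Rle_abs (ln (K / eps))). lra. }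
  rewrite S2 in S1.
  assert (exp (- (beta * ln t)) * K < eps / K * K) by (apply Rmult_lt_compat_r; auto).
  replace (eps / K * K) with eps in H0 by (field; lra). lra.
Qed.
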